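(* Let $\mu>1/2$, $0<\nu<1/2$, $M>0$, and let $g_1,g_2\in X$ with $\|g_i\|_\infty\le M$; let $F_1,F_2$ be the corresponding functions $F[g_1],F[g_2]$. Then there is a constant $c(\mu,\nu,M)$ depending only on $\mu,\nu,M$ such that $$|F_1'(x)-F_2'(x)|\le c(\mu,\nu,M)\|g_2-g_1\|_\infty\frac{1}{|x|^{2\nu}(x^2+1)^{\mu-\nu}}\quad(x\ne0),$$ $$|F_1(x)-F_2(x)|\le c(\mu,\nu,M)\|g_2-g_1\|_\infty |x|^{1-2\mu}\quad(|x|\ge1),\qquad |F_1(x)-F_2(x)|\le c(\mu,\nu,M)\|g_2-g_1\|_\infty\quad(x\in\mathbb{R}).$$
   Context: $X=\{g\in C(\mathbb{R})\cap L^\infty(\mathbb{R})\text{ real}:\ \lim_{x\to\pm\infty}g(x)=0\}$ with sup norm. For $g\in X$: $h^{-1}(0)=0$, $(h^{-1})'(x)=|x|^{\nu-1}(x^2+1)^{(\mu-\nu)/2}e^{g(x)}$; $\kappa>0$ with $\int_{\mathbb{R}}\frac{\kappa}{x h^{-1}(x)(h^{-1})'(x)}dx=(\mu-\nu)\pi$; $F=F[g]$ is the continuous function with $F'(x)=\frac{\kappa}{xh^{-1}(x)(h^{-1})'(x)}$ ($x\neq0$) and $F(+\infty)=0$ (so $F(-\infty)=-(\mu-\nu)\pi$). *)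

(* Defs.v *)
From Stdlib Require Import Reals.
Open Scope R_scope.

Definition lim_pinfty (f : R -> R) (l : R) : Prop :=
  forall eps, 0 < eps -> exists A, forall x, A < x -> Rabs (f x - l) < eps.

Definition lim_minfty (f : R -> R) (l : R) : Prop :=
  forall eps, 0 < eps -> exists A, forall x, x < A -> Rabs (f x - l) < eps.

Definition in_X (g : R -> R) : Prop :=
  continuity g /\ (exists B, forall x, Rabs (g x) <= B) /\
  lim_pinfty g 0 /\ lim_minfty g 0.

Definition is_sup_norm (f : R -> R) (D : R) : Prop :=
  is_lub (fun y => exists x, y = Rabs (f x)) D.

Definition dhinv (mu nu : R) (g : R -> R) (x : R) : R :=
  Rpower (Rabs x) (nu - 1) * Rpower (x ^ 2 + 1) ((mu - nu) / 2) * exp (g x).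

Definition is_hinv (mu nu : R) (g hinv : R -> R) : Prop :=
  hinv 0 = 0 /\ continuity hinv /\
  (forall x, x <> 0 -> derivable_pt_lim hinv x (dhinv mu nu g x)).

Definition Fprime (mu nu : R) (g hinv : R -> R) (kappa x : R) : R :=
  kappa / (x * hinv x * dhinv mu nu g x).

(* The last two conditions together are equivalent to the normalisation
   int_R kappa/(x h^{-1} (h^{-1})') dx = (mu-nu) pi. *)
Definition is_F (mu nu : R) (g hinv : R -> R) (kappa : R) (F : R -> R) : Prop :=
  0 < kappa /\ continuity F /\
  (forall x, x <> 0 -> derivable_pt_lim F x (Fprime mu nu g hinv kappa x)) /\
  lim_pinfty F 0 /\ lim_minfty F (- ((mu - nu) * PI)).

(* Main.v *)
Require Import Defs.
From Stdlib Require Import Reals Lra Lia.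
From Coquelicot Require Import Coquelicot.
Open Scope R_scope.

Lemma mono_int (h h' : R -> R) a b : a < b ->
  (forall x, a < x < b -> derivable_pt_lim h x (h' x)) ->
  (forall x, a < x < b -> 0 <= h' x) ->
  (forall x, a <= x <= b -> continuity_pt h x) -> h a <= h b.
Proof.
  intros ab Hd Hp Hc.
  set (df := fun x => if Rlt_dec a x then (if Rlt_dec x b then h' x else 0) else 0).
  destruct (MVT_gen h a b df) as [c [Hc1 Hc2]].
  - rewrite Rmin_left, Rmax_right by lra. intros x Hx.
    apply is_derive_Reals. unfold df.
    destruct (Rlt_dec a x); [|lra]. destruct (Rlt_dec x b); [|lra]. now apply Hd.
  - rewrite Rmin_left, Rmax_right by lra. intros; apply Hc; lra.
  - assert (0 <= df c).
    { unfold df. destruct (Rlt_dec a c); [|lra]. destruct (Rlt_dec c b); [|lra]. apply Hp; lra. }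
    assert (0 <= df c * (b - a)) by (apply Rmult_le_pos; lra). lra.
Qed.

Lemma mono (h h' : R -> R) : continuity h ->
  (forall x, x <> 0 -> derivable_pt_lim h x (h' x)) ->
  (forall x, x <> 0 -> 0 <= h' x) -> forall a b, a <= b -> h a <= h b.
Proof.
  intros Hc Hd Hp a b ab.
  assert (G : forall a b, a < b -> (b <= 0 \/ 0 <= a) -> h a <= h b).
  { intros a' b' ab' H. apply mono_int with h'; auto.
    - intros x Hx; apply Hd; lra.
    - intros x Hx; apply Hp; lra. }
  destruct (Req_dec a b) as [->|]; [lra|].
  destruct (Rle_dec b 0). apply G; lra.
  destruct (Rle_dec 0 a). apply G; lra.
  apply Rle_trans with (h 0); apply G; lra.
Qed.

Lemma ln_nonpos x : x <= 0 -> ln x = 0.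
Proof. intros; unfold ln; destruct (Rlt_dec 0 x); [exfalso; lra|reflexivity]. Qed.

Lemma rp_abs t b : Rpower (Rabs t) b = exp (b/2 * ln (t^2)).
Proof.
  unfold Rpower. f_equal.
  destruct (Req_dec t 0) as [E|nz].
  - subst t. rewrite !ln_nonpos. ring. simpl; lra. rewrite Rabs_R0; lra.
  - replace (t^2) with (Rabs t * Rabs t).
    2:{ rewrite <- Rabs_mult. rewrite Rabs_right. ring. nra. }
    rewrite ln_mult by (apply Rabs_pos_lt; auto). field.
Qed.

Lemma dS b x : x <> 0 ->
  derivable_pt_lim (fun t => t * Rpower (Rabs t) b) x ((1+b) * Rpower (Rabs x) b).
Proof.
  intros nz. apply is_derive_Reals.
  apply is_derive_ext with (fun t => t * exp (b/2 * ln (t^2))).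
  { intros; now rewrite rp_abs. }
  rewrite rp_abs.
  assert (0 < x^2) by (apply pow2_gt_0; auto).
  auto_derive. lra. replace (x*(x*1)) with (x^2) by ring. field. auto.
Qed.

Lemma dB p x :
  derivable_pt_lim (fun t => Rpower (t^2+1) p) x (p*(2*x)/(x^2+1) * Rpower (x^2+1) p).
Proof.
  apply is_derive_Reals. unfold Rpower.
  assert (0 < x^2 + 1) by (pose proof (pow2_ge_0 x); lra).
  auto_derive. lra. replace (x*(x*1)+1) with (x^2+1) by ring. field. lra.
Qed.

Lemma Rpower_pos a b : 0 < Rpower a b.
Proof. unfold Rpower; apply exp_pos. Qed.

Lemma cont0 (f : R -> R) a C : 0 < a -> f 0 = 0 ->
  (forall x, x <> 0 -> Rabs x < 1 -> Rabs (f x) <= C * Rpower (Rabs x) a) ->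
  continuity_pt f 0.
Proof.
  intros ha f0 Hb eps Heps.
  set (C' := Rabs C + 1).
  assert (0 < C') by (unfold C'; pose proof (Rabs_pos C); lra).
  set (d := Rmin 1 (Rpower (eps / C') (/ a))).
  assert (0 < d) by (unfold d; apply Rmin_pos; [lra| apply Rpower_pos]).
  exists d; split; auto.
  intros x [[_ Hx0] Hxd]. simpl in *. unfold R_dist in *. rewrite f0. rewrite Rminus_0_r in *.
  assert (x <> 0) by (intro; apply Hx0; auto).
  assert (Hx1 : Rabs x < 1) by (pose proof (Rmin_l 1 (Rpower (eps / C') (/ a))); unfold d in Hxd; lra).
  assert (Hxp : Rabs x < Rpower (eps / C') (/ a)) by (pose proof (Rmin_r 1 (Rpower (eps / C') (/ a))); unfold d in Hxd; lra).
  assert (Hlt : Rpower (Rabs x) a < eps / C').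
  { replace (eps / C') with (Rpower (Rpower (eps / C') (/ a)) a).
    apply Rlt_Rpower_l; auto. split; auto. apply Rabs_pos_lt; auto.
    rewrite Rpower_mult. replace (/ a * a) with 1 by (field; lra).
    apply Rpower_1. apply Rdiv_lt_0_compat; lra. }
  eapply Rle_lt_trans. apply Hb; auto.
  assert (C <= C') by (unfold C'; pose proof (Rle_abs C); lra).
  pose proof (Rpower_pos (Rabs x) a).
  apply Rle_lt_trans with (C' * Rpower (Rabs x) a). apply Rmult_le_compat_r; lra.
  apply Rlt_le_trans with (C' * (eps / C')). apply Rmult_lt_compat_l; lra.
  right; field; lra.
Qed.

Lemma exp_le x y : x <= y -> exp x <= exp y.
Proof. intros [H|H]; [left; now apply exp_increasing | subst; lra]. Qed.

Lemma Rabs_le_inv a b : Rabs a <= b -> - b <= a <= b.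
Proof. intros. pose proof (Rle_abs a). pose proof (Rle_abs (-a)). rewrite Rabs_Ropp in *. lra. Qed.

Definition Ef nu x := Rpower (Rabs x) (nu-1).
Definition Bf mu nu x := Rpower (x^2+1) ((mu-nu)/2).
Definition Lt mu nu t := t * Ef nu t * Bf mu nu t.
Definition fac mu nu x := nu + (mu-nu)*(x^2/(x^2+1)).
Definition Rr mu nu x := x^2 * (Ef nu x)^2 * (Bf mu nu x)^2.

Lemma dLt mu nu x : x <> 0 ->
  derivable_pt_lim (Lt mu nu) x (Ef nu x * Bf mu nu x * fac mu nu x).
Proof.
  intros nz.
  assert (H := derivable_pt_lim_mult _ _ x _ _ (dS (nu-1) x nz) (dB ((mu-nu)/2) x)).
  assert (0 < x^2+1) by (pose proof (pow2_ge_0 x); lra).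
  unfold Lt, Ef, Bf, fac, mult_fct in *.
  match goal with |- derivable_pt_lim _ _ ?l =>
    match type of H with derivable_pt_lim _ _ ?l' => replace l with l' end end.
  exact H. field. lra.
Qed.

Lemma rp_mul_abs x b : x <> 0 -> Rabs x * Rpower (Rabs x) b = Rpower (Rabs x) (1+b).
Proof.
  intros nz. rewrite Rpower_plus, Rpower_1; auto. apply Rabs_pos_lt; auto.
Qed.

Lemma Rpower_ge1 a c : 1 <= a -> 0 <= c -> 1 <= Rpower a c.
Proof.
  intros. replace 1 with (Rpower 1 c) at 1. apply Rle_Rpower_l; lra.
  unfold Rpower. rewrite ln_1. rewrite Rmult_0_r. apply exp_0.
Qed.

Lemma Rpower_le1 a c : 0 < a <= 1 -> 0 <= c -> Rpower a c <= 1.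
Proof.
  intros. replace 1 with (Rpower 1 c). apply Rle_Rpower_l; lra.
  unfold Rpower. rewrite ln_1. rewrite Rmult_0_r. apply exp_0.
Qed.

Lemma cLt mu nu : 0 < nu -> nu <= mu -> continuity (Lt mu nu).
Proof.
  intros hnu hmn x.
  destruct (Req_dec x 0) as [->|nz].
  - apply cont0 with nu (Rpower 2 ((mu-nu)/2)); auto.
    + unfold Lt; ring.
    + intros t nt t1. unfold Lt, Ef, Bf.
      rewrite !Rabs_mult.
      rewrite (Rabs_right (Rpower (Rabs t) (nu-1))) by (left; apply Rpower_pos).
      rewrite (Rabs_right (Rpower (t^2+1) _)) by (left; apply Rpower_pos).
      rewrite rp_mul_abs by auto.
      replace (1 + (nu-1)) with nu by ring.
      rewrite Rmult_comm. apply Rmult_le_compat_r. left; apply Rpower_pos.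
      apply Rle_Rpower_l. lra. split. pose proof (pow2_ge_0 t); lra.
      assert (t^2 <= 1). { rewrite <- pow2_abs.
        pose proof (Rabs_pos t). nra. } lra.
  - apply derivable_continuous_pt. eexists. apply dLt; auto.
Qed.

Lemma fac_bounds mu nu x : nu <= mu -> nu <= fac mu nu x <= mu.
Proof.
  intros. unfold fac.
  assert (0 < x^2+1) by (pose proof (pow2_ge_0 x); lra).
  assert (0 <= x^2/(x^2+1) <= 1).
  { split. apply Rdiv_le_0_compat; [apply pow2_ge_0|lra].
    apply Rmult_le_reg_r with (x^2+1); auto. field_simplify; lra. }
  nra.
Qed.

Lemma xpos (h : R -> R) : (forall a b, a <= b -> h a <= h b) -> h 0 = 0 ->
  forall x, 0 <= x * h x.
Proof.
  intros Hm H0 x. destruct (Rle_dec 0 x).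
  - assert (0 <= h x) by (rewrite <- H0; apply Hm; lra). nra.
  - assert (h x <= 0) by (rewrite <- H0; apply Hm; lra). nra.
Qed.

Lemma EB_pos mu nu x : 0 < Ef nu x * Bf mu nu x.
Proof. unfold Ef, Bf. apply Rmult_lt_0_compat; apply Rpower_pos. Qed.

Lemma hinv_lower mu nu M g hinv : 0 < nu -> nu <= mu ->
  (forall x, Rabs (g x) <= M) -> is_hinv mu nu g hinv ->
  forall x, exp (-M) / mu * (x * Lt mu nu x) <= x * hinv x.
Proof.
  intros hnu hmn Hg [H0 [Hc Hd]] x.
  set (k := exp (-M) / mu).
  assert (0 < k) by (unfold k; apply Rdiv_lt_0_compat; [apply exp_pos| lra]).
  assert (Hm := mono (fun t => hinv t - k * Lt mu nu t)
     (fun t => dhinv mu nu g t - k * (Ef nu t * Bf mu nu t * fac mu nu t))).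
  assert (0 <= x * (hinv x - k * Lt mu nu x)); [|nra].
  apply (xpos (fun t => hinv t - k * Lt mu nu t)). apply Hm.
  - intro t. apply continuity_pt_minus. apply Hc.
    apply continuity_pt_scal with (f := Lt mu nu). apply cLt; auto.
  - intros t nt. apply derivable_pt_lim_minus. auto.
    apply derivable_pt_lim_scal with (f := Lt mu nu). apply dLt; auto.
  - intros t nt. unfold dhinv. fold (Ef nu t). fold (Bf mu nu t).
    pose proof (EB_pos mu nu t). pose proof (fac_bounds mu nu t hmn).
    assert (k * fac mu nu t <= exp (g t)).
    { apply Rle_trans with (exp (-M)).
      unfold k. apply Rmult_le_reg_r with mu. lra. field_simplify; try lra.
      pose proof (exp_pos (-M)). nra.
      apply exp_le. pose proof (Rabs_le_inv _ _ (Hg t)) as HH. lra. }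
    nra.
  - rewrite H0. unfold Lt. ring.
Qed.

Lemma hinv_upper mu nu M g hinv : 0 < nu -> nu <= mu ->
  (forall x, Rabs (g x) <= M) -> is_hinv mu nu g hinv ->
  forall x, x * hinv x <= exp M / nu * (x * Lt mu nu x).
Proof.
  intros hnu hmn Hg [H0 [Hc Hd]] x.
  set (k := exp M / nu).
  assert (0 < k) by (unfold k; apply Rdiv_lt_0_compat; [apply exp_pos| lra]).
  assert (Hm := mono (fun t => k * Lt mu nu t - hinv t)
     (fun t => k * (Ef nu t * Bf mu nu t * fac mu nu t) - dhinv mu nu g t)).
  assert (0 <= x * (k * Lt mu nu x - hinv x)); [|nra].
  apply (xpos (fun t => k * Lt mu nu t - hinv t)). apply Hm.
  - intro t. apply continuity_pt_minus. 
    apply continuity_pt_scal with (f := Lt mu nu). apply cLt; auto. apply Hc.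
  - intros t nt. apply derivable_pt_lim_minus. 
    apply derivable_pt_lim_scal with (f := Lt mu nu). apply dLt; auto. auto.
  - intros t nt. unfold dhinv. fold (Ef nu t). fold (Bf mu nu t).
    pose proof (EB_pos mu nu t). pose proof (fac_bounds mu nu t hmn).
    assert (exp (g t) <= k * fac mu nu t).
    { apply Rle_trans with (exp M).
      apply exp_le. pose proof (Rabs_le_inv _ _ (Hg t)) as HH. lra.
      unfold k. apply Rmult_le_reg_r with nu. lra. field_simplify; try lra.
      pose proof (exp_pos M). nra. }
    nra.
  - rewrite H0. unfold Lt. ring.
Qed.

Lemma hinv_pair mu nu g1 g2 hinv1 hinv2 D :
  (forall x, g2 x - g1 x <= D) -> is_hinv mu nu g1 hinv1 -> is_hinv mu nu g2 hinv2 ->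
  forall x, x * hinv2 x <= exp D * (x * hinv1 x).
Proof.
  intros Hg [H10 [H1c H1d]] [H20 [H2c H2d]] x.
  assert (Hm := mono (fun t => exp D * hinv1 t - hinv2 t)
     (fun t => exp D * dhinv mu nu g1 t - dhinv mu nu g2 t)).
  assert (0 <= x * (exp D * hinv1 x - hinv2 x)); [|nra].
  apply (xpos (fun t => exp D * hinv1 t - hinv2 t)). apply Hm.
  - intro t. apply continuity_pt_minus. 
    apply continuity_pt_scal with (f := hinv1). auto. auto.
  - intros t nt. apply derivable_pt_lim_minus. 
    apply derivable_pt_lim_scal with (f := hinv1). auto. auto.
  - intros t nt. unfold dhinv. fold (Ef nu t). fold (Bf mu nu t).
    pose proof (EB_pos mu nu t).
    assert (exp (g2 t) <= exp D * exp (g1 t)).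
    { rewrite <- exp_plus. apply exp_le. specialize (Hg t). lra. }
    nra.
  - rewrite H10, H20. ring.
Qed.

Lemma mono_int2 (h h' : R -> R) a b : a <= b ->
  (forall x, a <= x <= b -> continuity_pt h x) ->
  (forall x, a < x < b -> x <> 0 -> derivable_pt_lim h x (h' x)) ->
  (forall x, a < x < b -> x <> 0 -> 0 <= h' x) -> h a <= h b.
Proof.
  intros ab Hc Hd Hp.
  assert (G : forall a' b', a <= a' -> a' < b' -> b' <= b -> (b' <= 0 \/ 0 <= a') -> h a' <= h b').
  { intros a' b' H1 H2 H3 H. apply mono_int with h'; auto.
    - intros x Hx; apply Hd; lra.
    - intros x Hx; apply Hp; lra.
    - intros; apply Hc; lra. }
  destruct (Req_dec a b) as [->|]; [lra|].
  destruct (Rle_dec b 0). apply G; lra.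
  destruct (Rle_dec 0 a). apply G; lra.
  apply Rle_trans with (h 0); apply G; lra.
Qed.

Definition S b t := t * Rpower (Rabs t) b.

Lemma S_abs b x : x <> 0 -> Rabs (S b x) = Rpower (Rabs x) (1+b).
Proof.
  intros. unfold S. rewrite Rabs_mult, (Rabs_right (Rpower _ _)) by (left; apply Rpower_pos).
  apply rp_mul_abs; auto.
Qed.

Lemma S_cont_nz b x : x <> 0 -> continuity_pt (S b) x.
Proof. intros. apply derivable_continuous_pt. eexists. apply dS; auto. Qed.

Lemma S_cont0 b : 0 < 1 + b -> continuity_pt (S b) 0.
Proof.
  intros. apply cont0 with (1+b) 1; auto. unfold S; ring.
  intros. rewrite S_abs; auto. lra.
Qed.

Lemma psi (f df : R -> R) K b a1 a2 : 1 + b <> 0 -> a1 <= a2 ->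
  (forall x, a1 <= x <= a2 -> continuity_pt f x) ->
  (forall x, a1 <= x <= a2 -> continuity_pt (S b) x) ->
  (forall x, x <> 0 -> derivable_pt_lim f x (df x)) ->
  (forall x, x <> 0 -> Rabs (df x) <= K * Rpower (Rabs x) b) ->
  f a1 + K/(1+b) * S b a1 <= f a2 + K/(1+b) * S b a2.
Proof.
  intros nb a12 Hfc HSc Hd Hb.
  apply (mono_int2 (fun t => f t + K/(1+b) * S b t)
     (fun t => df t + K/(1+b) * ((1+b) * Rpower (Rabs t) b))); auto.
  - intros x Hx. apply continuity_pt_plus. auto.
    apply continuity_pt_scal with (f := S b). auto.
  - intros x _ nx. apply derivable_pt_lim_plus. auto.
    apply derivable_pt_lim_scal with (f := S b). apply dS; auto.
  - intros x _ nx. replace (K / (1 + b) * ((1 + b) * Rpower (Rabs x) b)) with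
      (K * Rpower (Rabs x) b) by (field; auto).
    specialize (Hb x nx). pose proof (Rle_abs (- df x)). rewrite Rabs_Ropp in *. lra.
Qed.

Lemma lim_p_le f l x A : lim_pinfty f l -> (forall y, x <= y -> A <= f y) -> A <= l.
Proof.
  intros Hl H. destruct (Rle_dec A l); auto. exfalso.
  destruct (Hl (A - l)) as [B HB]; [lra|].
  specialize (HB (Rmax B x + 1)). specialize (H (Rmax B x + 1)).
  pose proof (Rmax_l B x); pose proof (Rmax_r B x).
  assert (HH : Rabs (f (Rmax B x + 1) - l) < A - l) by (apply HB; lra).
  pose proof (Rle_abs (f (Rmax B x + 1) - l)). assert (A <= f (Rmax B x + 1)) by (apply H; lra). lra.
Qed.

Lemma lim_p_ge f l x A : lim_pinfty f l -> (forall y, x <= y -> f y <= A) -> l <= A.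
Proof.
  intros Hl H. destruct (Rle_dec l A); auto. exfalso.
  destruct (Hl (l - A)) as [B HB]; [lra|].
  specialize (HB (Rmax B x + 1)). specialize (H (Rmax B x + 1)).
  pose proof (Rmax_l B x); pose proof (Rmax_r B x).
  assert (HH : Rabs (f (Rmax B x + 1) - l) < l - A) by (apply HB; lra).
  pose proof (Rle_abs (-(f (Rmax B x + 1) - l))). rewrite Rabs_Ropp in *.
  assert (f (Rmax B x + 1) <= A) by (apply H; lra). lra.
Qed.

Lemma lim_m_le f l x A : lim_minfty f l -> (forall y, y <= x -> A <= f y) -> A <= l.
Proof.
  intros Hl H. destruct (Rle_dec A l); auto. exfalso.
  destruct (Hl (A - l)) as [B HB]; [lra|].
  specialize (HB (Rmin B x - 1)). specialize (H (Rmin B x - 1)).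
  pose proof (Rmin_l B x); pose proof (Rmin_r B x).
  assert (HH : Rabs (f (Rmin B x - 1) - l) < A - l) by (apply HB; lra).
  pose proof (Rle_abs (f (Rmin B x - 1) - l)). assert (A <= f (Rmin B x - 1)) by (apply H; lra). lra.
Qed.

Lemma lim_m_ge f l x A : lim_minfty f l -> (forall y, y <= x -> f y <= A) -> l <= A.
Proof.
  intros Hl H. destruct (Rle_dec l A); auto. exfalso.
  destruct (Hl (l - A)) as [B HB]; [lra|].
  specialize (HB (Rmin B x - 1)). specialize (H (Rmin B x - 1)).
  pose proof (Rmin_l B x); pose proof (Rmin_r B x).
  assert (HH : Rabs (f (Rmin B x - 1) - l) < l - A) by (apply HB; lra).
  pose proof (Rle_abs (-(f (Rmin B x - 1) - l))). rewrite Rabs_Ropp in *.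
  assert (f (Rmin B x - 1) <= A) by (apply H; lra). lra.
Qed.

Lemma lin_bound u v fa gb e : Rabs fa < e -> Rabs gb < e -> 0 < e ->
  Rabs (u * fa - v * gb) <= (Rabs u + Rabs v) * e.
Proof.
  intros. eapply Rle_trans. apply Rabs_triang. rewrite Rabs_Ropp, !Rabs_mult.
  pose proof (Rabs_pos u); pose proof (Rabs_pos v).
  assert (Rabs u * Rabs fa <= Rabs u * e) by (apply Rmult_le_compat_l; lra).
  assert (Rabs v * Rabs gb <= Rabs v * e) by (apply Rmult_le_compat_l; lra). lra.
Qed.

Lemma lim_p_lin f g a b u v : lim_pinfty f a -> lim_pinfty g b ->
  lim_pinfty (fun x => u * f x - v * g x) (u * a - v * b).
Proof.
  intros Hf Hg eps He.
  set (e := eps / (Rabs u + Rabs v + 1)).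
  assert (0 < Rabs u + Rabs v + 1) by (pose proof (Rabs_pos u); pose proof (Rabs_pos v); lra).
  assert (0 < e) by (apply Rdiv_lt_0_compat; lra).
  destruct (Hf e H0) as [A1 HA1]. destruct (Hg e H0) as [A2 HA2].
  exists (Rmax A1 A2). intros x Hx.
  pose proof (Rmax_l A1 A2); pose proof (Rmax_r A1 A2).
  replace (u * f x - v * g x - (u * a - v * b)) with (u * (f x - a) - v * (g x - b)) by ring.
  eapply Rle_lt_trans. apply (lin_bound u v (f x - a) (g x - b) e); auto. apply HA1; lra. apply HA2; lra.
  apply Rlt_le_trans with ((Rabs u + Rabs v + 1) * e). apply Rmult_lt_compat_r; lra.
  right. unfold e. field. lra.
Qed.

Lemma lim_m_lin f g a b u v : lim_minfty f a -> lim_minfty g b ->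
  lim_minfty (fun x => u * f x - v * g x) (u * a - v * b).
Proof.
  intros Hf Hg eps He.
  set (e := eps / (Rabs u + Rabs v + 1)).
  assert (0 < Rabs u + Rabs v + 1) by (pose proof (Rabs_pos u); pose proof (Rabs_pos v); lra).
  assert (0 < e) by (apply Rdiv_lt_0_compat; lra).
  destruct (Hf e H0) as [A1 HA1]. destruct (Hg e H0) as [A2 HA2].
  exists (Rmin A1 A2). intros x Hx.
  pose proof (Rmin_l A1 A2); pose proof (Rmin_r A1 A2).
  replace (u * f x - v * g x - (u * a - v * b)) with (u * (f x - a) - v * (g x - b)) by ring.
  eapply Rle_lt_trans. apply (lin_bound u v (f x - a) (g x - b) e); auto. apply HA1; lra. apply HA2; lra.
  apply Rlt_le_trans with ((Rabs u + Rabs v + 1) * e). apply Rmult_lt_compat_r; lra.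
  right. unfold e. field. lra.
Qed.

Lemma exp_m t : 0 <= t -> 1 - t <= exp (- t).
Proof.
  intros [H|H]. left. pose proof (exp_ineq1 (-t)). lra.
  subst. rewrite Ropp_0, exp_0. lra.
Qed.

Lemma expdiff t a b : 0 <= t -> 0 <= a -> b <= exp t * a -> a <= exp t * b ->
  Rabs (a - b) <= t * exp t * a.
Proof.
  intros ht ha H1 H2.
  pose proof (exp_m t ht). pose proof (exp_pos t).
  assert (E : exp (-t) * exp t = 1) by (rewrite <- exp_plus; replace (-t+t) with 0 by ring; apply exp_0).
  assert (1 <= exp t) by (replace 1 with (exp 0) by apply exp_0; apply exp_le; lra).
  assert (Hb : exp (-t) * a <= b).
  { apply Rmult_le_reg_l with (exp t); auto. replace (exp t * (exp (-t) * a)) with a by (rewrite <- (Rmult_assoc), (Rmult_comm (exp t)), E; ring). lra. }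
  destruct (Rle_dec a b).
  - rewrite Rabs_minus_sym, Rabs_right by lra.
    (* b - a <= (exp t - 1) a <= t exp t a *)
    assert (exp t - 1 <= t * exp t).
    { assert (exp t * (1 - t) <= exp t * exp (-t)) by (apply Rmult_le_compat_l; lra).
      rewrite Rmult_comm in E. lra. }
    nra.
  - rewrite Rabs_right by lra.
    assert (a - b <= t * a) by nra.
    assert (t * a <= t * exp t * a) by (rewrite Rmult_assoc; apply Rmult_le_compat_l; nra).
    lra.
Qed.

Lemma Rr_Q mu nu x : x <> 0 ->
  Rr mu nu x = Rpower (Rabs x) (2*nu) * Rpower (x^2+1) (mu-nu).
Proof.
  intros nz. unfold Rr, Ef, Bf.
  replace (2*nu) with (1 + 1 + (nu-1) + (nu-1)) by ring.
  replace (mu-nu) with ((mu-nu)/2 + (mu-nu)/2) at 2 by field.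
  rewrite !Rpower_plus. rewrite Rpower_1 by (apply Rabs_pos_lt; auto).
  rewrite <- pow2_abs. ring.
Qed.

Lemma T_pos mu nu x : x <> 0 -> 0 < x * Lt mu nu x.
Proof.
  intros. unfold Lt. replace (x * (x * Ef nu x * Bf mu nu x)) with
   (x^2 * (Ef nu x * Bf mu nu x)) by ring.
  apply Rmult_lt_0_compat. apply pow2_gt_0; auto. apply EB_pos.
Qed.

Lemma Rr_T mu nu x : Rr mu nu x = (x * Lt mu nu x) * (Ef nu x * Bf mu nu x).
Proof. unfold Rr, Lt. ring. Qed.

Definition q mu nu (g hinv : R -> R) x :=
  / (x * hinv x) * / (Ef nu x * Bf mu nu x) * exp (- g x).

Lemma Fprime_q mu nu g hinv kappa x : x * hinv x <> 0 ->
  Fprime mu nu g hinv kappa x = kappa * q mu nu g hinv x.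
Proof.
  intros. unfold Fprime, q, dhinv. fold (Ef nu x). fold (Bf mu nu x).
  rewrite exp_Ropp. pose proof (exp_pos (g x)). unfold Ef, Bf.
  pose proof (Rpower_pos (Rabs x) (nu-1)). pose proof (Rpower_pos (x^2+1) ((mu-nu)/2)).
  field. repeat split; try lra; intro Z; apply H; rewrite Z; ring.
Qed.

Lemma P_pos mu nu M g hinv x : 0 < nu -> nu <= mu ->
  (forall x, Rabs (g x) <= M) -> is_hinv mu nu g hinv -> x <> 0 -> 0 < x * hinv x.
Proof.
  intros. eapply Rlt_le_trans; [|eapply hinv_lower; eauto].
  apply Rmult_lt_0_compat. apply Rdiv_lt_0_compat. apply exp_pos. lra. apply T_pos; auto.
Qed.

Lemma q_upper mu nu M g hinv x : 0 < nu -> nu <= mu ->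
  (forall x, Rabs (g x) <= M) -> is_hinv mu nu g hinv -> x <> 0 ->
  q mu nu g hinv x <= mu * exp (2*M) / Rr mu nu x.
Proof.
  intros hnu hmn Hg Hh nz. unfold q. rewrite Rr_T.
  pose proof (T_pos mu nu x nz) as HT. pose proof (EB_pos mu nu x) as HE.
  pose proof (hinv_lower mu nu M g hinv hnu hmn Hg Hh x) as HL.
  set (T := x * Lt mu nu x) in *. set (EB := Ef nu x * Bf mu nu x) in *.
  set (P := x * hinv x) in *.
  assert (0 < exp (-M)/mu * T) by (apply Rmult_lt_0_compat; auto; apply Rdiv_lt_0_compat; [apply exp_pos|lra]).
  assert (HiP : / P <= / (exp (-M)/mu * T)) by (apply Rinv_le_contravar; auto).
  assert (Hg' : exp (- g x) <= exp M) by (apply exp_le; pose proof (Rabs_le_inv _ _ (Hg x)); lra).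
  assert (e2 : exp (2*M) = exp M * exp M) by (rewrite <- exp_plus; f_equal; ring).
  assert (eM : exp (-M) * exp M = 1) by (rewrite <- exp_plus; replace (-M+M) with 0 by ring; apply exp_0).
  assert (0 < P) by lra.
  apply Rle_trans with (/ (exp (-M) / mu * T) * / EB * exp M).
  { apply Rmult_le_compat. 
    - apply Rmult_le_pos; left; apply Rinv_0_lt_compat; auto.
    - left; apply exp_pos.
    - apply Rmult_le_compat_r. left; apply Rinv_0_lt_compat; auto. auto.
    - auto. }
  right. rewrite e2. pose proof (exp_pos M). rewrite !exp_Ropp.
  field. repeat split; lra.
Qed.

Lemma q_lower mu nu M g hinv x : 0 < nu -> nu <= mu ->
  (forall x, Rabs (g x) <= M) -> is_hinv mu nu g hinv -> x <> 0 ->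
  nu * exp (-(2*M)) / Rr mu nu x <= q mu nu g hinv x.
Proof.
  intros hnu hmn Hg Hh nz. unfold q. rewrite Rr_T.
  pose proof (T_pos mu nu x nz) as HT. pose proof (EB_pos mu nu x) as HE.
  pose proof (hinv_upper mu nu M g hinv hnu hmn Hg Hh x) as HL.
  pose proof (P_pos mu nu M g hinv x hnu hmn Hg Hh nz) as HP.
  set (T := x * Lt mu nu x) in *. set (EB := Ef nu x * Bf mu nu x) in *.
  set (P := x * hinv x) in *.
  assert (HiP : / (exp M/nu * T) <= / P) by (apply Rinv_le_contravar; auto).
  assert (Hg' : exp (-M) <= exp (- g x)) by (apply exp_le; pose proof (Rabs_le_inv _ _ (Hg x)); lra).
  assert (e2 : exp (-(2*M)) = exp (-M) * exp (-M)) by (rewrite <- exp_plus; f_equal; ring).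
  assert (eM : exp (-M) * exp M = 1) by (rewrite <- exp_plus; replace (-M+M) with 0 by ring; apply exp_0).
  apply Rle_trans with (/ (exp M / nu * T) * / EB * exp (-M)).
  2:{ apply Rmult_le_compat. 
    - apply Rmult_le_pos; left; apply Rinv_0_lt_compat; auto.
      apply Rmult_lt_0_compat; auto. apply Rdiv_lt_0_compat; [apply exp_pos|lra].
    - left; apply exp_pos.
    - apply Rmult_le_compat_r. left; apply Rinv_0_lt_compat; auto. auto.
    - auto. }
  right. rewrite e2. pose proof (exp_pos M). rewrite !exp_Ropp.
  field. repeat split; lra.
Qed.

Lemma q_pair mu nu M g1 g2 hinv1 hinv2 D x : 0 < nu -> nu <= mu ->
  (forall x, Rabs (g1 x) <= M) -> (forall x, Rabs (g2 x) <= M) ->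
  (forall x, Rabs (g2 x - g1 x) <= D) ->
  is_hinv mu nu g1 hinv1 -> is_hinv mu nu g2 hinv2 -> x <> 0 ->
  q mu nu g2 hinv2 x <= exp (2*D) * q mu nu g1 hinv1 x.
Proof.
  intros hnu hmn Hg1 Hg2 HD Hh1 Hh2 nz. unfold q.
  pose proof (P_pos mu nu M g1 hinv1 x hnu hmn Hg1 Hh1 nz) as HP1.
  pose proof (P_pos mu nu M g2 hinv2 x hnu hmn Hg2 Hh2 nz) as HP2.
  assert (H12 : x * hinv1 x <= exp D * (x * hinv2 x)).
  { apply (hinv_pair mu nu g2 g1 hinv2 hinv1 D); auto.
    intro t. pose proof (Rabs_le_inv _ _ (HD t)); lra. }
  pose proof (EB_pos mu nu x) as HE.
  set (EB := Ef nu x * Bf mu nu x) in *.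
  set (P1 := x * hinv1 x) in *. set (P2 := x * hinv2 x) in *.
  assert (Hg : exp (- g2 x) <= exp D * exp (- g1 x)).
  { rewrite <- exp_plus. apply exp_le. pose proof (Rabs_le_inv _ _ (HD x)); lra. }
  assert (Hi : / P2 <= exp D * / P1).
  { pose proof (exp_pos D).
    apply Rmult_le_reg_r with P1; auto. rewrite Rmult_assoc, Rinv_l by lra.
    apply Rmult_le_reg_l with P2; auto. field_simplify; lra. }
  assert (e2 : exp (2*D) = exp D * exp D) by (rewrite <- exp_plus; f_equal; ring).
  rewrite e2.
  pose proof (exp_pos (- g2 x)). pose proof (exp_pos D).
  assert (0 < / EB) by (apply Rinv_0_lt_compat; auto).
  assert (0 < / P2) by (apply Rinv_0_lt_compat; auto).
  apply Rle_trans with ((exp D * / P1) * / EB * (exp D * exp (- g1 x))).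
  apply Rmult_le_compat; try nra.
  right; ring.
Qed.

Lemma F_mono mu nu M g hinv k F : 0 < nu -> nu <= mu ->
  (forall x, Rabs (g x) <= M) -> is_hinv mu nu g hinv -> is_F mu nu g hinv k F ->
  forall a b, a <= b -> F a <= F b.
Proof.
  intros hnu hmn Hg Hh [hk [Fc [Fd _]]].
  apply mono with (Fprime mu nu g hinv k); auto.
  intros x nz. pose proof (P_pos mu nu M g hinv x hnu hmn Hg Hh nz).
  rewrite Fprime_q by lra. unfold q.
  pose proof (EB_pos mu nu x). pose proof (exp_pos (- g x)).
  pose proof (Rinv_0_lt_compat _ H). pose proof (Rinv_0_lt_compat _ H0).
  assert (0 < / (x * hinv x) * / (Ef nu x * Bf mu nu x) * exp (- g x)).
  repeat apply Rmult_lt_0_compat; auto. nra.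
Qed.

Lemma kappa_pair mu nu M g1 g2 hinv1 hinv2 k1 k2 F1 F2 D : 0 < nu -> nu < mu ->
  (forall x, Rabs (g1 x) <= M) -> (forall x, Rabs (g2 x) <= M) ->
  (forall x, Rabs (g2 x - g1 x) <= D) ->
  is_hinv mu nu g1 hinv1 -> is_hinv mu nu g2 hinv2 ->
  is_F mu nu g1 hinv1 k1 F1 -> is_F mu nu g2 hinv2 k2 F2 ->
  k1 <= exp (2*D) * k2.
Proof.
  intros hnu hmn Hg1 Hg2 HD Hh1 Hh2 HF1 HF2.
  pose proof HF1 as [hk1 [F1c [F1d [F1p F1m]]]].
  pose proof HF2 as [hk2 [F2c [F2d [F2p F2m]]]].
  set (u := exp (2*D) / k1). set (v := / k2).
  assert (Hm : forall a b, a <= b -> u * F1 a - v * F2 a <= u * F1 b - v * F2 b).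
  { apply mono with (fun t => u * Fprime mu nu g1 hinv1 k1 t - v * Fprime mu nu g2 hinv2 k2 t).
    - intro t. apply continuity_pt_minus.
      apply continuity_pt_scal with (f := F1); auto.
      apply continuity_pt_scal with (f := F2); auto.
    - intros t nt. apply derivable_pt_lim_minus.
      apply derivable_pt_lim_scal with (f := F1); auto.
      apply derivable_pt_lim_scal with (f := F2); auto.
    - intros t nt.
      pose proof (P_pos mu nu M g1 hinv1 t hnu (Rlt_le _ _ hmn) Hg1 Hh1 nt).
      pose proof (P_pos mu nu M g2 hinv2 t hnu (Rlt_le _ _ hmn) Hg2 Hh2 nt).
      rewrite !Fprime_q by lra.
      pose proof (q_pair mu nu M g1 g2 hinv1 hinv2 D t hnu (Rlt_le _ _ hmn) Hg1 Hg2 HD Hh1 Hh2 nt).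
      unfold u, v. replace (exp (2 * D) / k1 * (k1 * q mu nu g1 hinv1 t)) with
        (exp (2 * D) * q mu nu g1 hinv1 t) by (field; lra).
      replace (/ k2 * (k2 * q mu nu g2 hinv2 t)) with (q mu nu g2 hinv2 t) by (field; lra).
      lra. }
  assert (Lp := lim_p_lin F1 F2 0 0 u v F1p F2p).
  assert (Lm := lim_m_lin F1 F2 _ _ u v F1m F2m).
  assert (A1 := lim_p_le _ _ 0 (u * F1 0 - v * F2 0) Lp (fun y hy => Hm 0 y hy)).
  assert (A2 := lim_m_ge _ _ 0 (u * F1 0 - v * F2 0) Lm (fun y hy => Hm y 0 hy)).
  assert (v <= u).
  { pose proof PI_RGT_0. assert (0 < (mu - nu) * PI) by (apply Rmult_lt_0_compat; lra).
    assert ((v - u) * ((mu - nu) * PI) <= 0) by nra. nra. }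
  unfold u, v in H. pose proof (exp_pos (2*D)).
  apply Rmult_le_reg_r with (/ k1). apply Rinv_0_lt_compat; lra.
  rewrite Rinv_r by lra. apply Rmult_le_reg_l with (/ k2). apply Rinv_0_lt_compat; lra.
  replace (/ k2 * (exp (2 * D) * k2 * / k1)) with (exp (2*D) / k1) by (field; lra). lra.
Qed.

Definition Q2 mu nu := Rpower 2 (2*nu) * Rpower 5 (mu-nu).
Definition K0 mu nu M := (mu-nu)*PI*Q2 mu nu*exp(2*M)/nu.

Lemma kappa_bound mu nu M g hinv k F : 0 < nu -> nu < mu ->
  (forall x, Rabs (g x) <= M) -> is_hinv mu nu g hinv -> is_F mu nu g hinv k F ->
  k <= K0 mu nu M.
Proof.
  intros hnu hmn Hg Hh HF.
  pose proof (F_mono mu nu M g hinv k F hnu (Rlt_le _ _ hmn) Hg Hh HF) as Hm.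
  destruct HF as [hk [Fc [Fd [Fp Fm]]]].
  assert (A1 : F 2 <= 0) by (apply (lim_p_le F 0 2 (F 2) Fp); intros; apply Hm; lra).
  assert (A2 : - ((mu - nu) * PI) <= F 1) by (apply (lim_m_ge F _ 1 (F 1) Fm); intros; apply Hm; lra).
  destruct (MVT_gen F 1 2 (Fprime mu nu g hinv k)) as [c [Hc1 Hc2]].
  - rewrite Rmin_left, Rmax_right by lra. intros x Hx. apply is_derive_Reals. apply Fd; lra.
  - intros; apply Fc.
  - rewrite Rmin_left, Rmax_right in Hc1 by lra.
    assert (nc : c <> 0) by lra.
    pose proof (P_pos mu nu M g hinv c hnu (Rlt_le _ _ hmn) Hg Hh nc).
    rewrite Fprime_q in Hc2 by lra.
    pose proof (q_lower mu nu M g hinv c hnu (Rlt_le _ _ hmn) Hg Hh nc) as Hq.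
    rewrite Rr_Q in Hq by auto.
    assert (HQ : Rpower (Rabs c) (2*nu) * Rpower (c^2+1) (mu-nu) <= Q2 mu nu).
    { unfold Q2. pose proof (Rpower_pos (Rabs c) (2*nu)). apply Rmult_le_compat.
      left; apply Rpower_pos. left; apply Rpower_pos.
      apply Rle_Rpower_l. lra. rewrite Rabs_right by lra. lra.
      apply Rle_Rpower_l. lra. split. nra. nra. }
    set (Qc := Rpower (Rabs c) (2*nu) * Rpower (c^2+1) (mu-nu)) in *.
    assert (0 < Qc) by (apply Rmult_lt_0_compat; apply Rpower_pos).
    assert (HQ2 : nu * exp (- (2 * M)) / Q2 mu nu <= q mu nu g hinv c).
    { eapply Rle_trans; [|exact Hq]. unfold Rdiv. apply Rmult_le_compat_l.
      pose proof (exp_pos (-(2*M))). nra. apply Rinv_le_contravar; auto. }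
    assert (k * (nu * exp (- (2 * M)) / Q2 mu nu) <= (mu - nu) * PI).
    { apply Rle_trans with (k * q mu nu g hinv c). apply Rmult_le_compat_l; lra. nra. }
    unfold K0. match goal with H : k * _ <= _ |- _ => rewrite exp_Ropp in H end. pose proof (exp_pos (2*M)).
    assert (0 < Q2 mu nu) by lra.
    apply Rmult_le_reg_r with (nu * / exp (2 * M) / Q2 mu nu).
    apply Rmult_lt_0_compat. apply Rmult_lt_0_compat; auto. apply Rinv_0_lt_compat; auto.
    apply Rinv_0_lt_compat; auto.
    replace ((mu - nu) * PI * Q2 mu nu * exp (2 * M) / nu * (nu * / exp (2 * M) / Q2 mu nu))
      with ((mu - nu) * PI) by (field; lra). lra.
Qed.

Lemma x2_rp x : x <> 0 -> x^2 = Rpower (Rabs x) 2.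
Proof.
  intros nz. replace 2 with (1+1) by ring. rewrite Rpower_plus, Rpower_1 by (apply Rabs_pos_lt; auto).
  rewrite <- pow2_abs. ring.
Qed.

Lemma invRr_mu mu nu x : x <> 0 -> nu <= mu -> / Rr mu nu x <= Rpower (Rabs x) (- (2*mu)).
Proof.
  intros nz hmn. rewrite Rr_Q by auto. rewrite Rpower_Ropp. apply Rinv_le_contravar.
  apply Rpower_pos.
  assert (Rpower (x^2) (mu - nu) <= Rpower (x^2+1) (mu-nu)).
  { apply Rle_Rpower_l. lra. split. apply pow2_gt_0; auto. lra. }
  assert (E2 : Rpower (x^2) (mu-nu) = Rpower (Rabs x) (2 * (mu-nu))).
  { rewrite (x2_rp x nz). apply Rpower_mult. }
  rewrite E2 in H.
  replace (2*mu) with (2*nu + 2 * (mu-nu)) by ring. rewrite Rpower_plus.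
  apply Rmult_le_compat_l. left; apply Rpower_pos. lra.
Qed.

Lemma invRr_nu mu nu x : x <> 0 -> nu <= mu -> / Rr mu nu x <= Rpower (Rabs x) (- (2*nu)).
Proof.
  intros nz hmn. rewrite Rr_Q by auto. rewrite Rpower_Ropp. apply Rinv_le_contravar.
  apply Rpower_pos.
  assert (1 <= Rpower (x^2+1) (mu-nu)).
  { apply Rpower_ge1. pose proof (pow2_ge_0 x); lra. lra. }
  pose proof (Rpower_pos (Rabs x) (2*nu)). nra.
Qed.

Lemma part2_one (f df : R -> R) K mu : 1/2 < mu -> 0 <= K -> continuity f ->
  (forall x, x <> 0 -> derivable_pt_lim f x (df x)) ->
  (forall x, x <> 0 -> Rabs (df x) <= K * Rpower (Rabs x) (- (2*mu))) ->
  lim_pinfty f 0 -> lim_minfty f 0 ->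
  forall x, 1 <= Rabs x -> f x <= K / (2*mu - 1) * Rpower (Rabs x) (1 - 2*mu).
Proof.
  intros hmu hK fc fd fb fp fm x hx.
  set (b := - (2*mu)). assert (nb : 1 + b <> 0) by (unfold b; lra).
  assert (hab : K / (1 + b) <= 0).
  { unfold b. unfold Rdiv. apply Rmult_le_0_l. auto. left. apply Rinv_lt_0_compat. lra. }
  destruct (Rle_dec 0 x).
  - rewrite Rabs_right in hx by lra.
    assert (HS : S b x = Rpower (Rabs x) (1 - 2 * mu)).
    { replace (1 - 2*mu) with (1+b) by (unfold b; ring).
      rewrite <- S_abs by lra. rewrite Rabs_right. auto.
      unfold S. left. apply Rmult_lt_0_compat. lra. apply Rpower_pos. }
    assert (f x + K / (1 + b) * S b x <= 0).
    { apply (lim_p_le f 0 x); auto. intros y hy.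
      assert (Hp := psi f df K b x y nb hy (fun t _ => fc t)
        (fun t ht => S_cont_nz b t ltac:(lra)) fd fb).
      assert (0 < S b y) by (unfold S; apply Rmult_lt_0_compat; [lra|apply Rpower_pos]).
      assert (K / (1 + b) * S b y <= 0) by nra. lra. }
    rewrite HS in H. replace (K / (2 * mu - 1)) with (- (K / (1+b))) by (unfold b; field; lra).
    lra.
  - rewrite Rabs_left in hx by lra.
    assert (HS : S b x = - Rpower (Rabs x) (1 - 2 * mu)).
    { replace (1 - 2*mu) with (1+b) by (unfold b; ring).
      rewrite <- S_abs by lra. rewrite Rabs_left. ring.
      unfold S. assert (0 < Rpower (Rabs x) b) by apply Rpower_pos. assert (x < 0) by lra. nra. }
    assert (0 <= - f x + K / (1 + b) * S b x).
    { apply (lim_m_ge (fun t => - f t) 0 x).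
      intros eps he. destruct (fm eps he) as [A HA]. exists A. intros t ht.
      replace (- f t - 0) with (- (f t - 0)) by ring. rewrite Rabs_Ropp. auto.
      intros y hy.
      assert (Hp := psi (fun t => - f t) (fun t => - df t) K b y x nb hy
        (fun t _ => continuity_pt_opp f t (fc t))
        (fun t ht => S_cont_nz b t ltac:(lra))
        (fun t ht => derivable_pt_lim_opp f t (df t) (fd t ht))
        (fun t ht => eq_ind_r (fun z => z <= _) (fb t ht) (Rabs_Ropp (df t)))).
      simpl in Hp.
      assert (S b y < 0).
      { unfold S. assert (0 < Rpower (Rabs y) b) by apply Rpower_pos. nra. }
      assert (0 <= K / (1 + b) * S b y) by nra. lra. }
    rewrite HS in H. replace (K / (2 * mu - 1)) with (- (K / (1+b))) by (unfold b; field; lra).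
    lra.
Qed.

Lemma part3_one (f df : R -> R) K nu B : 0 < nu -> nu < 1/2 -> 0 <= K -> continuity f ->
  (forall x, x <> 0 -> derivable_pt_lim f x (df x)) ->
  (forall x, x <> 0 -> Rabs (df x) <= K * Rpower (Rabs x) (- (2*nu))) ->
  f 1 <= B ->
  forall x, Rabs x <= 1 -> f x <= B + 2 * K / (1 - 2*nu).
Proof.
  intros hnu hnu2 hK fc fd fb f1 x hx.
  set (b := - (2*nu)). assert (nb : 1 + b <> 0) by (unfold b; lra).
  assert (hab : 0 <= K / (1 + b)) by (unfold b; apply Rdiv_le_0_compat; lra).
  assert (Sb : forall t, Rabs t <= 1 -> Rabs (S b t) <= 1).
  { intros t ht. destruct (Req_dec t 0) as [->|nt]. unfold S. rewrite Rmult_0_l, Rabs_R0; lra.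
    rewrite S_abs by auto. apply Rpower_le1. split; auto. apply Rabs_pos_lt; auto. unfold b; lra. }
  assert (x <= 1) by (pose proof (Rle_abs x); lra).
  assert (Hp := psi f df K b x 1 nb H (fun t _ => fc t)).
  assert (Hp' : f x + K / (1 + b) * S b x <= f 1 + K / (1 + b) * S b 1).
  { apply Hp; auto. intros t ht. destruct (Req_dec t 0) as [->|nt].
    apply S_cont0. unfold b; lra. apply S_cont_nz; auto. }
  assert (A1 := Sb x hx). assert (A2 := Sb 1 ltac:(rewrite Rabs_R1; lra)).
  pose proof (Rle_abs (S b 1)). pose proof (Rle_abs (- S b x)). rewrite Rabs_Ropp in *.
  replace (2 * K / (1 - 2 * nu)) with (2 * (K / (1 + b))) by (unfold b; field; lra).
  nra.
Qed.

Lemma Rpower_1_base y : Rpower 1 y = 1.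
Proof. unfold Rpower. rewrite ln_1, Rmult_0_r. apply exp_0. Qed.

Lemma q_pos mu nu M g hinv x : 0 < nu -> nu <= mu ->
  (forall x, Rabs (g x) <= M) -> is_hinv mu nu g hinv -> x <> 0 -> 0 < q mu nu g hinv x.
Proof.
  intros. eapply Rlt_le_trans; [|eapply q_lower; eauto].
  rewrite Rr_T. pose proof (T_pos mu nu x H3). pose proof (EB_pos mu nu x).
  apply Rdiv_lt_0_compat. apply Rmult_lt_0_compat; auto. apply exp_pos.
  apply Rmult_lt_0_compat; auto.
Qed.

Theorem lemma5p5 (mu nu M : R) :
  1 / 2 < mu -> 0 < nu -> nu < 1 / 2 -> 0 < M ->
  exists c : R,
  forall (g1 g2 hinv1 hinv2 F1 F2 : R -> R) (kappa1 kappa2 D : R),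
    in_X g1 -> in_X g2 ->
    (forall x, Rabs (g1 x) <= M) -> (forall x, Rabs (g2 x) <= M) ->
    is_hinv mu nu g1 hinv1 -> is_hinv mu nu g2 hinv2 ->
    is_F mu nu g1 hinv1 kappa1 F1 -> is_F mu nu g2 hinv2 kappa2 F2 ->
    is_sup_norm (fun x => g2 x - g1 x) D ->
    (forall x, x <> 0 ->
       Rabs (Fprime mu nu g1 hinv1 kappa1 x - Fprime mu nu g2 hinv2 kappa2 x)
       <= c * D * (1 / (Rpower (Rabs x) (2 * nu) * Rpower (x ^ 2 + 1) (mu - nu)))) /\
    (forall x, 1 <= Rabs x ->
       Rabs (F1 x - F2 x) <= c * D * Rpower (Rabs x) (1 - 2 * mu)) /\
    (forall x, Rabs (F1 x - F2 x) <= c * D).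
Proof.
  intros hmu hnu hnu2 hM.
  assert (hmn : nu < mu) by lra. assert (hmn' : nu <= mu) by lra.
  set (K := K0 mu nu M).
  assert (hK : 0 < K).
  { unfold K, K0, Q2. pose proof PI_RGT_0. pose proof (exp_pos (2*M)).
    pose proof (Rpower_pos 2 (2*nu)). pose proof (Rpower_pos 5 (mu-nu)).
    apply Rdiv_lt_0_compat; auto. apply Rmult_lt_0_compat; [|auto]. apply Rmult_lt_0_compat; [|apply Rmult_lt_0_compat; auto]. apply Rmult_lt_0_compat; lra. }
  set (c1 := 4 * exp (8*M) * K * mu * exp (2*M)).
  assert (hc1 : 0 < c1).
  { unfold c1. pose proof (exp_pos (8*M)). pose proof (exp_pos (2*M)).
    apply Rmult_lt_0_compat; [|lra]. apply Rmult_lt_0_compat; [|lra]. apply Rmult_lt_0_compat; [|lra]. apply Rmult_lt_0_compat; lra. }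
  set (c2 := c1 / (2*mu - 1)).
  assert (hc2 : 0 < c2) by (unfold c2; apply Rdiv_lt_0_compat; lra).
  assert (hc3 : 0 < 2 * c1 / (1 - 2*nu)) by (apply Rdiv_lt_0_compat; lra).
  exists (c1 + c2 + 2 * c1 / (1 - 2*nu)).
  intros g1 g2 hinv1 hinv2 F1 F2 k1 k2 D X1 X2 Hg1 Hg2 Hh1 Hh2 HF1 HF2 HD.
  assert (HDb : forall x, Rabs (g2 x - g1 x) <= D).
  { intro x. destruct HD as [Hub _]. apply Hub. exists x. reflexivity. }
  assert (HDb' : forall x, Rabs (g1 x - g2 x) <= D).
  { intro x. rewrite Rabs_minus_sym. auto. }
  assert (HD0 : 0 <= D) by (pose proof (HDb 0); pose proof (Rabs_pos (g2 0 - g1 0)); lra).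
  assert (HD2 : D <= 2 * M).
  { destruct HD as [_ Hl]. apply Hl. intros y [x ->].
    unfold Rminus. eapply Rle_trans. apply Rabs_triang. rewrite Rabs_Ropp.
    pose proof (Hg1 x); pose proof (Hg2 x); lra. }
  assert (kp12 := kappa_pair mu nu M g1 g2 hinv1 hinv2 k1 k2 F1 F2 D hnu hmn Hg1 Hg2 HDb Hh1 Hh2 HF1 HF2).
  assert (kp21 := kappa_pair mu nu M g2 g1 hinv2 hinv1 k2 k1 F2 F1 D hnu hmn Hg2 Hg1 HDb' Hh2 Hh1 HF2 HF1).
  assert (kb1 := kappa_bound mu nu M g1 hinv1 k1 F1 hnu hmn Hg1 Hh1 HF1).
  pose proof HF1 as [hk1 [F1c [F1d [F1p F1m]]]].
  pose proof HF2 as [hk2 [F2c [F2d [F2p F2m]]]].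
  assert (dF : forall x, x <> 0 ->
    Rabs (Fprime mu nu g1 hinv1 k1 x - Fprime mu nu g2 hinv2 k2 x) <= c1 * D * / Rr mu nu x).
  { intros x nz.
    pose proof (P_pos mu nu M g1 hinv1 x hnu hmn' Hg1 Hh1 nz).
    pose proof (P_pos mu nu M g2 hinv2 x hnu hmn' Hg2 Hh2 nz).
    rewrite !Fprime_q by lra.
    pose proof (q_pair mu nu M g1 g2 hinv1 hinv2 D x hnu hmn' Hg1 Hg2 HDb Hh1 Hh2 nz) as Q21.
    pose proof (q_pair mu nu M g2 g1 hinv2 hinv1 D x hnu hmn' Hg2 Hg1 HDb' Hh2 Hh1 nz) as Q12.
    pose proof (q_pos mu nu M g1 hinv1 x hnu hmn' Hg1 Hh1 nz) as q1p.
    pose proof (q_pos mu nu M g2 hinv2 x hnu hmn' Hg2 Hh2 nz) as q2p.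
    pose proof (q_upper mu nu M g1 hinv1 x hnu hmn' Hg1 Hh1 nz) as q1u.
    set (q1 := q mu nu g1 hinv1 x) in *. set (q2 := q mu nu g2 hinv2 x) in *.
    assert (e4 : exp (4*D) = exp (2*D) * exp (2*D)) by (rewrite <- exp_plus; f_equal; ring).
    pose proof (exp_pos (2*D)).
    assert (B1 : k2 * q2 <= exp (4*D) * (k1 * q1)).
    { rewrite e4. apply Rle_trans with ((exp (2*D) * k1) * (exp (2*D) * q1)).
      apply Rmult_le_compat; lra. right; ring. }
    assert (B2 : k1 * q1 <= exp (4*D) * (k2 * q2)).
    { rewrite e4. apply Rle_trans with ((exp (2*D) * k2) * (exp (2*D) * q2)).
      apply Rmult_le_compat; lra. right; ring. }
    assert (H3 := expdiff (4*D) (k1*q1) (k2*q2) ltac:(lra) ltac:(nra) B1 B2).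
    eapply Rle_trans. exact H3.
    assert (E8 : exp (4*D) <= exp (8*M)) by (apply exp_le; lra).
    assert (Rr mu nu x > 0).
    { rewrite Rr_T. apply Rmult_lt_0_compat. apply T_pos; auto. apply EB_pos. }
    assert (A1 : k1 * q1 <= K * (mu * exp (2 * M) / Rr mu nu x)).
    { apply Rmult_le_compat; try lra; unfold K; lra. }
    pose proof (exp_pos (4*D)).
    apply Rle_trans with (4 * D * exp (8*M) * (K * (mu * exp (2 * M) / Rr mu nu x))).
    { apply Rmult_le_compat; try nra. }
    right. unfold c1. field. lra. }
  set (f := fun t => F1 t - F2 t).
  set (df := fun t => Fprime mu nu g1 hinv1 k1 t - Fprime mu nu g2 hinv2 k2 t).
  assert (fc : continuity f) by (apply continuity_minus; auto).
  assert (fd : forall x, x <> 0 -> derivable_pt_lim f x (df x))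
    by (intros; apply derivable_pt_lim_minus; auto).
  assert (fp : lim_pinfty f 0).
  { intros eps he. destruct (lim_p_lin F1 F2 0 0 1 1 F1p F2p eps he) as [A HA].
    exists A. intros x hx. specialize (HA x hx). unfold f.
    replace (F1 x - F2 x - 0) with (1 * F1 x - 1 * F2 x - (1 * 0 - 1 * 0)) by ring. auto. }
  assert (fm : lim_minfty f 0).
  { intros eps he. destruct (lim_m_lin F1 F2 _ _ 1 1 F1m F2m eps he) as [A HA].
    exists A. intros x hx. specialize (HA x hx). unfold f.
    replace (F1 x - F2 x - 0) with (1 * F1 x - 1 * F2 x - (1 * - ((mu - nu) * PI) - 1 * - ((mu - nu) * PI))) by ring. auto. }
  set (g := fun t => F2 t - F1 t).
  set (dg := fun t => Fprime mu nu g2 hinv2 k2 t - Fprime mu nu g1 hinv1 k1 t).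
  assert (gc : continuity g) by (apply continuity_minus; auto).
  assert (gd : forall x, x <> 0 -> derivable_pt_lim g x (dg x))
    by (intros; apply derivable_pt_lim_minus; auto).
  assert (gp : lim_pinfty g 0).
  { intros eps he. destruct (fp eps he) as [A HA]. exists A. intros x hx.
    specialize (HA x hx). unfold g. unfold f in HA.
    replace (F2 x - F1 x - 0) with (- (F1 x - F2 x - 0)) by ring. rewrite Rabs_Ropp; auto. }
  assert (gm : lim_minfty g 0).
  { intros eps he. destruct (fm eps he) as [A HA]. exists A. intros x hx.
    specialize (HA x hx). unfold g. unfold f in HA.
    replace (F2 x - F1 x - 0) with (- (F1 x - F2 x - 0)) by ring. rewrite Rabs_Ropp; auto. }
  assert (hc1D : 0 <= c1 * D) by nra.
  assert (bmu : forall x, x <> 0 -> Rabs (df x) <= c1 * D * Rpower (Rabs x) (- (2*mu))).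
  { intros. eapply Rle_trans. apply dF; auto. apply Rmult_le_compat_l; auto. apply invRr_mu; auto. }
  assert (bmu' : forall x, x <> 0 -> Rabs (dg x) <= c1 * D * Rpower (Rabs x) (- (2*mu))).
  { intros. unfold dg. rewrite Rabs_minus_sym. apply bmu; auto. }
  assert (bnu : forall x, x <> 0 -> Rabs (df x) <= c1 * D * Rpower (Rabs x) (- (2*nu))).
  { intros. eapply Rle_trans. apply dF; auto. apply Rmult_le_compat_l; auto. apply invRr_nu; auto. }
  assert (bnu' : forall x, x <> 0 -> Rabs (dg x) <= c1 * D * Rpower (Rabs x) (- (2*nu))).
  { intros. unfold dg. rewrite Rabs_minus_sym. apply bnu; auto. }
  assert (P2 : forall x, 1 <= Rabs x -> Rabs (F1 x - F2 x) <= c2 * D * Rpower (Rabs x) (1 - 2 * mu)).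
  { intros x hx.
    pose proof (part2_one f df (c1 * D) mu hmu hc1D fc fd bmu fp fm x hx).
    pose proof (part2_one g dg (c1 * D) mu hmu hc1D gc gd bmu' gp gm x hx).
    unfold f, g in *. replace (c2 * D) with (c1 * D / (2 * mu - 1)) by (unfold c2; field; lra).
    apply Rabs_le. lra. }
  split; [|split].
  - intros x nz. eapply Rle_trans. apply dF; auto.
    rewrite Rr_Q by auto. unfold Rdiv. rewrite Rmult_1_l.
    assert (0 < / (Rpower (Rabs x) (2 * nu) * Rpower (x ^ 2 + 1) (mu - nu))).
    { apply Rinv_0_lt_compat. apply Rmult_lt_0_compat; apply Rpower_pos. }
    apply Rmult_le_compat_r. lra. apply Rmult_le_compat_r; lra.
  - intros x hx. eapply Rle_trans. apply P2; auto.
    apply Rmult_le_compat_r. left; apply Rpower_pos. apply Rmult_le_compat_r; lra.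
  - intros x. destruct (Rle_dec 1 (Rabs x)).
    + eapply Rle_trans. apply P2; auto.
      assert (Rpower (Rabs x) (1 - 2 * mu) <= 1).
      { apply Rle_trans with (Rpower (Rabs x) 0). apply Rle_Rpower; lra. rewrite Rpower_O; lra. }
      assert (0 <= c2 * D) by nra.
      apply Rle_trans with (c2 * D * 1). apply Rmult_le_compat_l; auto.
      rewrite Rmult_1_r. apply Rmult_le_compat_r; lra.
    + assert (hx : Rabs x <= 1) by lra.
      assert (f1 : Rabs (f 1) <= c2 * D).
      { unfold f. pose proof (P2 1 ltac:(rewrite Rabs_R1; lra)). rewrite Rabs_R1, Rpower_1_base in H. lra. }
      pose proof (Rle_abs (f 1)). pose proof (Rle_abs (- f 1)). rewrite Rabs_Ropp in *.
      pose proof (part3_one f df (c1 * D) nu (c2 * D) hnu hnu2 hc1D fc fd bnu ltac:(lra) x hx).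
      pose proof (part3_one g dg (c1 * D) nu (c2 * D) hnu hnu2 hc1D gc gd bnu' ltac:(unfold g, f in *; lra) x hx).
      unfold f, g in *. apply Rabs_le.
      replace (2 * (c1 * D) / (1 - 2 * nu)) with (2 * c1 / (1 - 2 * nu) * D) in * by (field; lra).
      nra.
Qed.
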